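(* Let $\mathbf{R}=(\mathbf{R}^{\Rightarrow},\mathbf{R}^{\mathrm{o}})$ and let $M$ be an $\mathbf{R}$-ordered model. For every Boolean formula $A$ and world $w_1$ of $M$: if $w_1\models A$, then $w_1\in\max_{\succeq_N}(\Vert A\Vert)$ or there exists $w_2$ with $w_2\succ_N w_1$ and $w_2\in\max_{\succeq_N}(\Vert A\Vert)$.
   Context: Boolean formulas over propositional letters; $\models_{\mathrm{PL}}$ classical entailment. $\mathbf{R}^{\Rightarrow}$ is a finite set of normality conditionals $A\Rightarrow B$ ($A,B$ Boolean; body $b=A$, head $h=B$) and $\mathbf{R}^{\mathrm{o}}$ a finite set of obligations $\bigcirc(B/A)$. For $X\subseteq\mathbf{R}^{\Rightarrow}$, $\mathrm{m}(X)=\{A\rightarrow B:A\Rightarrow B\in X\}$. Standing assumption (coherence): there is no nonempty $X\subseteq\mathbf{R}^{\Rightarrow}$ with $\mathrm{m}(X)\models_{\mathrm{PL}}\bigwedge_{r\in X}\neg b(r)$. LM-sequence: $\varepsilon(X)=\{A\Rightarrow B\in\mathbf{R}^{\Rightarrow}:\mathrm{m}(X)\models_{\mathrm{PL}}\neg A\}$, $\mathcal{E}_0=\mathbf{R}^{\Rightarrow}$, $\mathcal{E}_{i+1}=\varepsilon(\mathcal{E}_i)$; the order $m$ is the least $k$ with $\mathcal{E}_l=\mathcal{E}_k$ for all $l\geq k$, and $\mathcal{E}_\infty=\mathcal{E}_m$. Ranked partition: $\Delta_i=\mathcal{E}_i\setminus\mathcal{E}_{i+1}$ for $0\le i\le m-1$,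 $\Delta_m=\mathcal{E}_\infty$. For $X\subseteq\mathbf{R}^{\Rightarrow}$ let $\tau(X)=\langle|\Delta_{m-1}\cap X|,\ldots,|\Delta_0\cap X|\rangle$; $X\gtrsim Y$ iff $\tau(X)=\tau(Y)$ or, at the first coordinate where they differ, the entry of $\tau(X)$ is smaller. An $\mathbf{R}$-ordered model is $(W,\succeq_N,\succeq_I,v)$ with $W\neq\emptyset$, $v$ a valuation, $w_1\succeq_N w_2$ iff $F(w_1)\gtrsim F(w_2)$ where $F(w)=\{r\in\mathbf{R}^{\Rightarrow}:w\models b(r)\wedge\neg h(r)\}$ (and $\succeq_I$ the ideality ordering determined by $\mathbf{R}^{\mathrm{o}}$, irrelevant here). $w\succ_N u$ iff $w\succeq_N u$ and not $u\succeq_N w$. $\max_{\succeq_N}(X)=\{w\in X:\forall u\in X(u\succeq_N w\Rightarrow w\succeq_N u)\}$; $\Vert A\Vert$ = set of worlds where $A$ holds. *)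

(* Defs.v *)
From mathcomp Require Import all_boot.
From mathcomp Require Import boolp.
Set Implicit Arguments. Unset Strict Implicit. Unset Printing Implicit Defensive.

Inductive form : Type :=
| Var of nat
| Top
| Bot
| Neg of form
| And of form & form
| Or of form & form
| Imp of form & form.

Fixpoint eval (val : nat -> bool) (f : form) : bool :=
  match f with
  | Var n => val n
  | Top => true
  | Bot => false
  | Neg g => ~~ eval val g
  | And g h => eval val g && eval val h
  | Or g h => eval val g || eval val h
  | Imp g h => eval val g ==> eval val h
  end.

Definition entails (Gamma : form -> Prop) (phi : form) : Prop :=
  forall val : nat -> bool, (forall g, Gamma g -> eval val g) -> eval val phi.

Definition bigAnd (s : seq form) : form := foldr And Top s.

Section Conditionals.
(** The finite set R^=> of normality conditionals, given as a finite index
    type [I] with body/head maps (injective: it is a set of conditionals). *)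
Variables (I : finType) (body head : I -> form).

Definition mat (X : {set I}) : form -> Prop :=
  fun g => exists2 r, r \in X & g = Imp (body r) (head r).

Definition coherent : Prop :=
  forall X : {set I}, X != set0 ->
    ~ entails (mat X) (bigAnd [seq Neg (body r) | r <- enum X]).

Definition eps (X : {set I}) : {set I} :=
  [set r | asbool (entails (mat X) (Neg (body r)))].

Fixpoint LM (i : nat) : {set I} :=
  match i with 0 => setT | i.+1 => eps (LM i) end.

Definition is_order (m : nat) : Prop :=
  (forall l, m <= l -> LM l = LM m) /\
  (forall k, (forall l, k <= l -> LM l = LM k) -> m <= k).

(** Ranked partition Delta_i = E_i \ E_{i+1} (used for i < m). *)
Definition Delta (i : nat) : {set I} := LM i :\: LM i.+1.

(** tau(X) = <|Delta_{m-1} cap X|, ..., |Delta_0 cap X|>; coordinates are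
    read from index m-1 downwards.  X >~ Y iff tau(X) = tau(Y) or at the
    first differing coordinate (= highest differing rank i < m) tau(X) is
    smaller. *)
Definition cnt (X : {set I}) (i : nat) : nat := #|Delta i :&: X|.

Definition pref (m : nat) (X Y : {set I}) : Prop :=
  (forall i, i < m -> cnt X i = cnt Y i) \/
  (exists j, [/\ j < m, cnt X j < cnt Y j &
               forall i, j < i < m -> cnt X i = cnt Y i]).

Variables (m : nat) (W : Type) (v : W -> nat -> bool).

Definition falsified (w : W) : {set I} :=
  [set r | eval (v w) (body r) && ~~ eval (v w) (head r)].

Definition geN (w1 w2 : W) : Prop := pref m (falsified w1) (falsified w2).
Definition gtN (w1 w2 : W) : Prop := geN w1 w2 /\ ~ geN w2 w1.

Definition maxN (X : W -> Prop) : W -> Prop :=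
  fun w => X w /\ forall u, X u -> geN u w -> geN w u.

Definition ext (A : form) : W -> Prop := fun w => eval (v w) A.

End Conditionals.

(* Main.v *)
Require Import Defs.
From mathcomp Require Import all_boot.
From mathcomp Require Import boolp.

Section Aux.
Variables (I : finType) (body head : I -> form).

Fixpoint lexle (k : nat) (X Y : {set I}) : bool :=
  if k is k'.+1 then (cnt body head X k' < cnt body head Y k') ||
    ((cnt body head X k' == cnt body head Y k') && lexle k' X Y)
  else true.

Lemma pref_lex k X Y : pref body head k X Y <-> lexle k X Y.
Proof.
elim: k => [|k IH] /=.
  by split => // _; left.
split.
- case=> [Hall|[j [Hj Hlt Hi]]].
  + have -> : cnt body head X k = cnt body head Y k by apply: Hall.
    rewrite eqxx ltnn /=; apply/IH; left => i Hi; apply: Hall; exact: ltnW.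
  + rewrite ltnS leq_eqVlt in Hj; case/orP: Hj => [/eqP Ejk|Hjk].
      by subst j; rewrite Hlt.
    have -> : cnt body head X k = cnt body head Y k by apply: Hi; rewrite Hjk ltnSn.
    rewrite eqxx ltnn /=; apply/IH; right; exists j; split => // i /andP [Hji Hik].
    by apply: Hi; rewrite Hji /= ltnW.
- case/orP => [Hlt|/andP [/eqP Heq /IH]].
    right; exists k; split => // i /andP [Hki Hik]; by rewrite ltnS leqNgt Hki in Hik.
  case=> [Hall|[j [Hj Hlt Hi]]].
    left => i; rewrite ltnS leq_eqVlt => /orP [/eqP ->|]; [exact: Heq|exact: Hall].
  right; exists j; split => //; first exact: ltnW.
  move=> i /andP [Hji]; rewrite ltnS leq_eqVlt => /orP [/eqP ->|Hik]; first exact: Heq.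
  by apply: Hi; rewrite Hji.
Qed.

Lemma lex_total k X Y : lexle k X Y || lexle k Y X.
Proof.
elim: k => [|k IH] //=.
case: (ltngtP (cnt body head X k) (cnt body head Y k)) => //=.
Qed.

Lemma lex_trans k X Y Z : lexle k X Y -> lexle k Y Z -> lexle k X Z.
Proof.
elim: k => [|k IH] //=.
case/orP => [H1|/andP [/eqP E1 H1]]; case/orP => [H2|/andP [/eqP E2 H2]].
- by rewrite (ltn_trans H1 H2).
- by rewrite -E2 H1.
- by rewrite E1 H2.
- by rewrite E1 E2 eqxx (IH H1 H2) orbT.
Qed.

Lemma best_seq k (s : seq {set I}) x0 : x0 \in s ->
  exists2 x, x \in s & forall y, y \in s -> lexle k x y.
Proof.
elim: s x0 => [//|a s IH] x0 _.
case: (boolP (nilp s)) => [/nilP ->|Hs].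
  exists a; first exact: mem_head.
  by move=> y; rewrite inE => /eqP ->; case/orP: (lex_total k a a).
have [b Hb] : exists b, b \in s by case: s Hs {IH} => // b s _; exists b; exact: mem_head.
have [x Hx Hmin] := IH b Hb.
case/orP: (lex_total k a x) => Hax.
  exists a; first exact: mem_head.
  move=> y; rewrite inE => /orP [/eqP ->|Hy].
    by case/orP: (lex_total k a a).
  exact: lex_trans Hax (Hmin _ Hy).
exists x; first by rewrite inE Hx orbT.
move=> y; rewrite inE => /orP [/eqP ->|Hy] //; exact: Hmin.
Qed.

End Aux.
Arguments lexle {I} body head k X Y.
Arguments pref_lex {I} body head k X Y.
Arguments lex_trans {I} body head k X Y Z.
Arguments best_seq {I} body head k {s x0}.

Theorem proposition1 (I : finType) (body head : I -> form)
  (inj : forall r s, body r = body s -> head r = head s -> r = s)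
  (coh : coherent body head)
  (m : nat) (hm : is_order body head m)
  (W : Type) (hW : inhabited W) (v : W -> nat -> bool)
  (A : form) (w1 : W) :
  eval (v w1) A ->
  maxN body head m v (ext v A) w1 \/
  exists w2, gtN body head m v w2 w1 /\ maxN body head m v (ext v A) w2.
Proof.
move=> HA.
pose P := fun X : {set I} => `[< exists w, ext v A w /\ falsified body head v w = X >].
pose s := [seq X <- enum {set I} | P X].
have Hin : forall w, ext v A w -> falsified body head v w \in s.
  move=> w Hw; rewrite mem_filter mem_enum andbT; apply/asboolP; by exists w.
have [X HX Hbest] := best_seq body head m (Hin w1 HA).
move: HX; rewrite mem_filter => /andP [/asboolP [w2 [Hw2 EX]] _].
have Hg : forall u, ext v A u -> geN body head m v w2 u.
  move=> u Hu; rewrite /geN pref_lex EX; exact: Hbest (Hin u Hu).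
have Hmax2 : maxN body head m v (ext v A) w2 by split => // u Hu _; exact: Hg.
case: (boolP (lexle body head m (falsified body head v w1) (falsified body head v w2))) => H12.
  left; split => // u Hu _; rewrite /geN pref_lex.
  apply: lex_trans H12 _; rewrite -pref_lex; exact: Hg.
right; exists w2; split => //; split; first exact: Hg.
by rewrite /geN pref_lex; apply/negP.
Qed.
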